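(* Let $k,\Delta$ be integers with $\Delta>2$ and $k\ge 2\Delta-2$, and let $n> c\cdot\binom{k}{\Delta}\log\binom{k}{\Delta}$ for some constant $c>0$. Let $\mathbf{A}$ and $\mathbf{B}$ be two $n\times k$ binary matrices, each drawn from the uniform ensemble with parameters $(k,\Delta)$, and assume $\mathbf{A}\mathbf{A}^T=\mathbf{B}\mathbf{B}^T$. Then, with overwhelming probability, $\mathbf{B}=\mathbf{A}\mathbf{P}$ for some $k\times k$ permutation matrix $\mathbf{P}$, i.e. $\mathbf{B}$ is a column-permuted version of $\mathbf{A}$.
   Context: $T_k(\Delta)=\{\mathbf{c}\in\{0,1\}^k : \text{the Hamming weight of }\mathbf{c}\text{ is }\Delta\}$. An $n\times k$ binary matrix is drawn from the uniform ensemble if its $n$ rows are drawn independently and uniformly at random from $T_k(\Delta)$. *)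

(* Defs.v *)
From mathcomp Require Import all_boot all_order all_algebra all_fingroup.
From Stdlib Require Import Reals.
Set Implicit Arguments. Unset Strict Implicit. Unset Printing Implicit Defensive.
Import GRing.Theory.
Local Open Scope ring_scope.

Definition intmx (n k : nat) (A : 'M[bool]_(n, k)) : 'M[int]_(n, k) :=
  map_mx (fun b : bool => Posz (b : nat)) A.

Definition row_weight (n k : nat) (A : 'M[bool]_(n, k)) (i : 'I_n) : nat :=
  #|[set j | A i j]|.

(* Support of the uniform ensemble with parameters (k, Delta): every row
   lies in T_k(Delta).  Drawing the n rows independently and uniformly from
   T_k(Delta) is the same as drawing A uniformly from this finite set. *)
Definition ensemble (n k Delta : nat) : {set 'M[bool]_(n, k)} :=
  [set A | [forall i, row_weight A i == Delta]].

Definition gram (n k : nat) (A : 'M[bool]_(n, k)) : 'M[int]_n :=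
  (intmx A *m (intmx A)^T).

Definition col_permuted (n k : nat) (A B : 'M[bool]_(n, k)) : bool :=
  [exists s : 'S_k, intmx B == (intmx A *m perm_mx s)].

Definition bad (n k Delta : nat) (A : 'M[bool]_(n, k)) : bool :=
  [exists B in ensemble n k Delta, (gram B == gram A) && ~~ col_permuted A B].

Definition prob_bad (n k Delta : nat) : R :=
  (INR #|[set A in ensemble n k Delta | bad Delta A ]| /
   INR #|ensemble n k Delta|).

(* Main.v *)
Require Import Defs.
From mathcomp Require Import all_boot.
From Stdlib Require Import Reals.
From Stdlib Require Import Lra Lia.
From mathcomp Require Import zify.

Module Comb.
From mathcomp Require Import all_boot all_order all_algebra all_fingroup.
From mathcomp Require Import zify.
Set Implicit Arguments. Unset Strict Implicit. Unset Printing Implicit Defensive.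
Import GRing.Theory.

Lemma sub_of_card (T : finType) (X Y : {set T}) :
  #|X| <= #|X :&: Y| -> X \subset Y.
Proof.
move=> h; have: X :&: Y == X by rewrite eqEcard subsetIl h.
by move/eqP/setIidPl.
Qed.

Lemma eq_of_card (T : finType) (X Y : {set T}) :
  #|X| = #|Y| -> #|X| <= #|X :&: Y| -> X = Y.
Proof.
move=> e h; apply/eqP; rewrite eqEcard sub_of_card //= e //.
Qed.

Definition presv k e (f : {set 'I_k} -> {set 'I_k}) :=
  (forall S : {set 'I_k}, #|S| = e -> #|f S| = e) /\
  (forall S T : {set 'I_k}, #|S| = e -> #|T| = e -> #|f S :&: f T| = #|S :&: T|).

Arguments presv : clear implicits.
Lemma presv_inj k e f : presv k e f -> forall S T : {set 'I_k}, #|S| = e -> #|T| = e -> f S = f T -> S = T.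
Proof.
move=> [h1 h2] S T hS hT E.
apply: eq_of_card; first by rewrite hS hT.
by rewrite -h2 // E setIid h1 // hS.
Qed.

Lemma card_U1 k (W : {set 'I_k}) z : z \notin W -> #|z |: W| = #|W|.+1.
Proof. by move=> h; rewrite cardsU1 h. Qed.

Lemma inter_U1 k (W : {set 'I_k}) z1 z2 : z1 \notin W -> z2 \notin W -> z1 != z2 ->
  (z1 |: W) :&: (z2 |: W) = W.
Proof.
move=> h1 h2 h12; apply/setP=> x; rewrite !inE.
case: (eqVneq x z1) => [->|xz1] /=; first by rewrite (negbTE h12) (negbTE h1).
case: (eqVneq x z2) => [->|xz2] /=; first by rewrite (negbTE h2).
by rewrite andbb.
Qed.

Lemma sunflower k e f : presv k e.+1 f -> 2*e+3 <= k ->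
  forall (W : {set 'I_k}) z1 z2 z, #|W| = e -> z1 \notin W -> z2 \notin W -> z1 != z2 ->
  z \notin W -> f (z1 |: W) :&: f (z2 |: W) \subset f (z |: W).
Proof.
move=> [hc hi] hk W z1 z2 z hW n1 n2 n12 nz.
pose h := fun y => f (y |: W).
have hcard y : y \notin W -> #|h y| = e.+1.
  by move=> yW; rewrite /h hc // card_U1 // hW.
have hint y y' : y \notin W -> y' \notin W -> e <= #|h y :&: h y'|.
  move=> yW y'W; case: (eqVneq y y') => [<-|ne]; first by rewrite setIid (hcard y yW).
  by rewrite /h hi ?card_U1 ?hW // inter_U1 // hW.
have cI : #|h z1 :&: h z2| = e.
  by rewrite /h hi ?card_U1 ?hW // inter_U1.
set I := h z1 :&: h z2.
apply/negPn/negP => nIT.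
have A : forall T' : {set 'I_k}, #|T'| = e.+1 -> e <= #|T' :&: h z1| -> e <= #|T' :&: h z2| ->
    ~~ (I \subset T') -> T' \subset h z1 :|: h z2.
  move=> T' cT' a1 a2 nI; apply: sub_of_card; rewrite cT'.
  have: T' :&: I \proper I.
    rewrite properEneq subsetIr andbT; apply: contra nI => /eqP <-; exact: subsetIl.
  move/proper_card; rewrite cI => lt.
  have := cardsUI (T' :&: h z1) (T' :&: h z2).
  rewrite -setIUr setIACA setIid -/I. lia.
have Tsub : h z \subset h z1 :|: h z2 by apply: A; rewrite ?hcard ?hint.
have all y : y \notin W -> h y \subset h z1 :|: h z2.
  move=> yW; case: (boolP (I \subset h y)) => Iy; last by apply: A; rewrite ?hcard ?hint.
  have X : I :|: h z \subset h z1 :|: h z2.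
    by rewrite subUset Tsub (subset_trans (subsetIl _ _) (subsetUl _ _)).
  apply: subset_trans X.
  apply: sub_of_card; rewrite hcard //.
  have := cardsUI (h y :&: I) (h y :&: h z).
  rewrite -setIUr setIACA setIid.
  have -> : h y :&: I = I by apply/setIidPr.
  have: I :&: h z \proper I.
    rewrite properEneq subsetIl andbT; apply: contra nIT => /eqP <-; exact: subsetIr.
  move/proper_card; rewrite cI => lt.
  have := subset_leq_card (subsetIr (h y) (I :&: h z)).
  have := hint y z yW nz. lia.
have sub : (h @: (~: W)) \subset [set B : {set 'I_k} | B \subset h z1 :|: h z2 & #|B| == e.+1].
  apply/subsetP => _ /imsetP [y yW ->]; rewrite inE in yW.
  by rewrite inE all // hcard // eqxx.
have := subset_leq_card sub.
rewrite cards_draws card_in_imset; last first.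
  move=> y y'; rewrite !inE => yW y'W /(presv_inj (conj hc hi)).
  rewrite !card_U1 ?hW // => /(_ erefl erefl) /setP /(_ y).
  rewrite !inE eqxx /= (negbTE yW) orbF. by move/esym/eqP.
have := cardsUI (h z1) (h z2); rewrite -/I cI !hcard // => cU.
have -> : #|h z1 :|: h z2| = e.+2 by lia.
rewrite binSn cardsCs setCK card_ord hW. lia.
Qed.

Definition phi k (f : {set 'I_k} -> {set 'I_k}) (W : {set 'I_k}) :=
  \bigcap_(z in ~: W) f (z |: W).

Lemma phi_sub k f (W : {set 'I_k}) z : z \notin W -> phi f W \subset f (z |: W).
Proof. by move=> zW; apply: (bigcap_inf z); rewrite inE. Qed.

Lemma phi_eq k e f : presv k e.+1 f -> 2*e+3 <= k ->
  forall (W : {set 'I_k}) z1 z2, #|W| = e -> z1 \notin W -> z2 \notin W -> z1 != z2 ->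
  phi f W = f (z1 |: W) :&: f (z2 |: W).
Proof.
move=> hp hk W z1 z2 hW n1 n2 n12; apply/eqP; rewrite eqEsubset.
rewrite subsetI !phi_sub //=.
by apply/bigcapsP => z; rewrite inE => zW; apply: (sunflower hp).
Qed.

Lemma two_out k (X : {set 'I_k}) : #|X| + 2 <= k -> exists z1 z2, [/\ z1 \notin X, z2 \notin X & z1 != z2].
Proof.
move=> h; have : 1 < #|~: X| by rewrite cardsCs setCK card_ord; lia.
by case/card_gt1P => z1 [z2 [a b c]]; exists z1, z2; rewrite -!in_setC.
Qed.

Lemma phi_card k e f : presv k e.+1 f -> 2*e+3 <= k ->
  forall (W : {set 'I_k}), #|W| = e -> #|phi f W| = e.
Proof.
move=> hp hk W hW; have [|z1 [z2 [n1 n2 n12]]] := @two_out k W; first lia.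
rewrite (phi_eq hp hk hW n1 n2 n12); case: hp => hc hi.
by rewrite hi ?card_U1 ?hW // inter_U1.
Qed.

Lemma inter2 k (W W' : {set 'I_k}) z z' : z \notin W -> z \notin W' -> z' \notin W ->
  z' \notin W' -> z != z' -> (z |: W) :&: (z' |: W') = W :&: W'.
Proof.
move=> h1 h2 h3 h4 h5; apply/setP=> x; rewrite !inE.
case: (eqVneq x z) => [->|xz] /=; first by rewrite (negbTE h5) (negbTE h1) (negbTE h2).
case: (eqVneq x z') => [->|xz'] /=; by rewrite ?(negbTE h3) ?(negbTE h4) ?andbF.
Qed.

Lemma inter_ab k (W W' : {set 'I_k}) a b : a \notin W -> a \in W' -> b \in W -> b \notin W' ->
  (a |: W) :&: (b |: W') = a |: (b |: (W :&: W')).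
Proof.
move=> h1 h2 h3 h4; apply/setP=> x; rewrite !inE.
case: (eqVneq x a) => [->|xa] /=; first by rewrite h2 orbT.
case: (eqVneq x b) => [->|xb] /=; by rewrite ?h3.
Qed.

Lemma phi_presv k e f : presv k e.+1 f -> 2*e+3 <= k -> presv k e (phi f).
Proof.
move=> hp hk; split; first exact: phi_card.
move=> W W' hW hW'.
case: (eqVneq W W') => [<-|ne]; first by rewrite !setIid (phi_card hp hk hW) hW.
have [hc hi] := hp.
have sWW' : ~~ (W' \subset W).
  apply: contra ne => s; rewrite eq_sym eqEcard s hW hW' /=; done.
have sW'W : ~~ (W \subset W').
  apply: contra ne => s; rewrite eqEcard s hW hW' /=; done.
case/subsetPn: sWW' => a aW' aW.
case/subsetPn: sW'W => b bW bW'.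
apply/eqP; rewrite eqn_leq; apply/andP; split.
- have [|z [z' [n1 n2 n12]]] := @two_out k (W :|: W').
    have := leq_card_setU W W'; rewrite hW hW' => /leqifP; case: ifP => _ h; lia.
  move: n1 n2; rewrite !inE !negb_or => /andP [n1 n1'] /andP [n2 n2'].
  rewrite -(inter2 n1 n1' n2 n2' n12) -(hi (z |: W) (z' |: W')) ?card_U1 ?hW ?hW' //.
  by apply: subset_leq_card; apply: setISS; apply: phi_sub.
- have := hi (a |: W) (b |: W'); rewrite !card_U1 ?hW ?hW' // => /(_ erefl erefl).
  rewrite inter_ab // !cardsU1 !inE (negbTE bW') (negbTE aW) andbF andFb orbF.
  have -> : (a == b) = false by apply/negbTE; apply: contraNneq aW => ->.
  move=> /= E.
  set X := f (a |: W); set Y := f (b |: W').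
  have pX : phi f W \subset X by apply: phi_sub.
  have pY : phi f W' \subset Y by apply: phi_sub.
  have cX : #|X :\: phi f W| = 1.
    by rewrite cardsD (setIidPr pX) hc ?card_U1 ?hW // (phi_card hp hk hW); lia.
  have cY : #|Y :\: phi f W'| = 1.
    by rewrite cardsD (setIidPr pY) hc ?card_U1 ?hW' // (phi_card hp hk hW'); lia.
  have sub : X :&: Y \subset (phi f W :&: phi f W') :|: ((X :\: phi f W) :|: (Y :\: phi f W')).
    apply/subsetP => x; rewrite !inE; case/andP => -> ->.
    by case: (x \in phi f W); case: (x \in phi f W').
  have := subset_leq_card sub.
  have := (leq_card_setU (phi f W :&: phi f W') ((X :\: phi f W) :|: (Y :\: phi f W'))).1.
  have := (leq_card_setU (X :\: phi f W) (Y :\: phi f W')).1.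
  rewrite cX cY -/X -/Y in E *; simpl in E.
  move=> h2 h1 h0. rewrite E in h0. move: h0 h1 h2. set U := #|_ :|: (_ :|: _)|. set V := #|_ :|: _|. set p := #|phi f W :&: _|. set j := #|W :&: W'|. lia.
Qed.

Lemma johnson k e : forall f, presv k e f -> 2*e+1 <= k ->
  exists s : {perm 'I_k}, forall S : {set 'I_k}, #|S| = e -> f S = s @: S.
Proof.
elim: e => [|e IH] f hp hk.
  exists 1%g => S /eqP; rewrite cards_eq0 => /eqP ->.
  have [hc _] := hp; have := hc set0 (cards0 _); move/eqP; rewrite cards_eq0 => /eqP ->.
  by rewrite imset0.
have [hc hi] := hp.
case: e IH hp hc hi hk => [|e] IH hp hc hi hk.
  pose g (x : 'I_k) := odflt x [pick y in f [set x]].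
  have gE x : f [set x] = [set g x].
    have [y E] : exists y, f [set x] = [set y] by apply/cards1P; rewrite hc // cards1.
    rewrite /g E; case: pickP => [y' |]; first by rewrite inE => /eqP ->.
    by move/(_ y); rewrite inE eqxx.
  have ginj : injective g.
    move=> x x' E; apply/set1_inj; apply: (presv_inj hp); rewrite ?cards1 // !gE E //.
  exists (perm ginj) => S /eqP/cards1P [x ->].
  by rewrite gE imset_set1 permE.
have hk1 : 2 * e.+1 + 3 <= k by lia.
have hk2 : 2 * e.+1 + 1 <= k by lia.
have [s hs] := IH (phi f) (phi_presv hp hk1) hk2.
exists s => S hS.
have sub : s @: S \subset f S.
  apply/subsetP => _ /imsetP [x xS ->].
  have : 1 < #|S| by rewrite hS.
  case/card_gt1P => y1 [y2 [y1S y2S ne]].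
  have [y [yS yx]] : exists y, y \in S /\ y != x.
    case: (eqVneq y1 x) => [e1|]; last by exists y1.
    exists y2; split => //; rewrite -e1 eq_sym //.
  have hW : #|S :\ y| = e.+1 by rewrite (cardsD1 y S) yS in hS; case: hS.
  have nyS : y \notin S :\ y by rewrite setD11.
  have := phi_sub f nyS; rewrite setD1K // => /subsetP; apply.
  by rewrite hs // imset_f // !inE xS eq_sym yx.
apply/eqP; rewrite eq_sym eqEcard sub /= card_imset ?hc ?hS //; exact: perm_inj.
Qed.


Definition rs n k (A : 'M[bool]_(n, k)) i : {set 'I_k} := [set j | A i j].

Lemma gram_card n k (A : 'M[bool]_(n, k)) i j : gram A i j = Posz #|rs A i :&: rs A j|.
Proof.
rewrite /gram !mxE.
rewrite (eq_bigr (fun l => ((A i l && A j l) : nat)%:R%R)); last first.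
  by move=> l _; rewrite !mxE; case: (A i l); case: (A j l).
rewrite -natr_sum natz -sum1_card; congr Posz.
rewrite [RHS]big_mkcond; apply: eq_bigr => l _; rewrite !inE; by case: (A i l); case: (A j l).
Qed.

Lemma ens_card n k D (A : 'M[bool]_(n, k)) : A \in ensemble n k D -> forall i, #|rs A i| = D.
Proof. by rewrite inE => /forallP h i; apply/eqP; exact: h i. Qed.

Lemma key n k D (A B : 'M[bool]_(n, k)) : (2*D+1 <= k)%N -> A \in ensemble n k D ->
  B \in ensemble n k D -> gram B = gram A ->
  (forall S : {set 'I_k}, #|S| = D -> exists i, rs A i = S) -> col_permuted A B.
Proof.
move=> hk hA hB hgr hall.
have cA := ens_card hA; have cB := ens_card hB.
have hg i j : #|rs B i :&: rs B j| = #|rs A i :&: rs A j|.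
  by have := congr1 (fun M : 'M[int]_n => M i j) hgr; rewrite /= !gram_card => -[].
pose f (S : {set 'I_k}) := if [pick i | rs A i == S] is Some i then rs B i else S.
have fE (S : {set 'I_k}) : #|S| = D -> exists i, rs A i = S /\ f S = rs B i.
  move=> hS; case: (hall S hS) => i0 e0; rewrite /f; case: pickP => [i /eqP ei|/(_ i0)].
    by exists i.
  by rewrite e0 eqxx.
have hp : presv k D f.
  split.
    by move=> S hS; have [i [_ ->]] := fE S hS; exact: cB.
  move=> S T hS hT; have [i [<- ->]] := fE S hS; have [j [<- ->]] := fE T hT; exact: hg.
have [s hs] := johnson hp hk.
have rowE i : rs B i = s @: rs A i.
  have [i0 [e0 f0]] := fE (rs A i) (cA i).
  rewrite -hs ?cA // f0; apply: eq_of_card; rewrite ?cB // hg e0 setIid cA //.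
apply/existsP; exists s; apply/eqP/matrixP => i j.
rewrite -[s]invgK -col_permE !mxE.
have -> : B i j = (j \in rs B i) by rewrite inE.
by rewrite rowE -{1}(permKV s j) mem_imset ?inE //; exact: perm_inj.
Qed.

Lemma count_rows n k (P : {set {set 'I_k}}) :
  #|[set A : 'M[bool]_(n, k) | [forall i, rs A i \in P]]| = (#|P| ^ n)%N.
Proof.
pose M (A : 'M[bool]_(n, k)) := [ffun i => rs A i].
have Minj : injective M.
  move=> A A' /ffunP E; apply/matrixP => i j; have := E i; rewrite !ffunE => /setP /(_ j).
  by rewrite !inE.
rewrite -(card_imset _ Minj) -[n in (_ ^ n)%N]card_ord -card_ffun_on.
apply: eq_card => g; apply/imsetP/ffun_onP.
  by case=> A; rewrite inE => /forallP h -> x; rewrite ffunE.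
move=> h; exists (\matrix_(i, j) (j \in g i))%R.
  by rewrite inE; apply/forallP => i; have := h i; congr (_ \in P); apply/setP => j; rewrite !inE mxE.
by apply/ffunP => i; rewrite ffunE; apply/setP => j; rewrite !inE mxE.
Qed.

Definition Dset k D := [set S : {set 'I_k} | #|S| == D].

Lemma card_Dset k D : #|Dset k D| = 'C(k, D).
Proof. by rewrite /Dset card_draws card_ord. Qed.

Lemma ens_eq n k D : ensemble n k D = [set A : 'M[bool]_(n, k) | [forall i, rs A i \in Dset k D]].
Proof. by apply/setP => A; rewrite !inE; apply: eq_forallb => i; rewrite inE. Qed.

Lemma card_ens n k D : #|ensemble n k D| = ('C(k, D) ^ n)%N.
Proof. by rewrite ens_eq count_rows card_Dset. Qed.

Lemma card_bad n k D : (2*D+1 <= k)%N ->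
  (#|[set A in ensemble n k D | bad D A]| <= 'C(k, D) * ('C(k, D) - 1) ^ n)%N.
Proof.
move=> hk.
pose Y (S : {set 'I_k}) := [set A : 'M[bool]_(n, k) | [forall i, rs A i \in Dset k D :\ S]].
have cY S : S \in Dset k D -> #|Y S| = (('C(k, D) - 1) ^ n)%N.
  move=> SD; have := cardsD1 S (Dset k D); rewrite SD card_Dset => e.
  by rewrite count_rows; congr (_ ^ _)%N; rewrite e add1n subn1.
set X := [set A in ensemble n k D | bad D A].
have hX : forall A, A \in X -> (1 <= \sum_(S in Dset k D) (A \in Y S))%N.
  move=> A; rewrite inE => /andP [hA].
  case: (boolP [forall S in Dset k D, [exists i, rs A i == S]]) => hall.
    case/exists_inP => B hB /andP [/eqP hg /negP []].
    apply: key hk hA hB hg _ => S hS.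
    have SD : S \in Dset k D by rewrite inE hS.
    have /existsP [i /eqP ei] := (forall_inP hall) S SD.
    by exists i.
  move=> _; case/forall_inPn: hall => S SD /existsPn nS.
  rewrite (bigD1 S) //= inE.
  suff -> : [forall i, rs A i \in Dset k D :\ S] by [].
  apply/forallP => i; rewrite !inE (nS i) /=.
  by move: (ens_card hA i) => ->; rewrite eqxx.
apply: (@leq_trans (\sum_(A in X) \sum_(S in Dset k D) (A \in Y S))).
  by rewrite -sum1_card; apply: leq_sum.
rewrite exchange_big /=.
apply: (@leq_trans (\sum_(S in Dset k D) (('C(k, D) - 1) ^ n)%N)); last first.
  by rewrite sum_nat_const card_Dset.
apply: leq_sum => S SD; rewrite -(cY S SD) -sum1_card.
rewrite [X in (_ <= X)%N]big_mkcond [X in (X <= _)%N]big_mkcond /=.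
apply: leq_sum => A _; case: (A \in X); case: (A \in Y S) => //.
Qed.

End Comb.
Import Comb.

Lemma bin_ge k D : (1 <= D)%N -> (D <= k)%N -> (k - D + 1 <= 'C(k, D))%N.
Proof.
elim: k D => [|k IH] D h1 h2; first by case: D h1 h2.
case: D h1 h2 => [//|[|D]] _ h2.
  by rewrite bin1; lia.
rewrite binS.
case: (ltnP k D.+2) => hk.
  have : (0 < 'C(k, D.+1))%N by rewrite bin_gt0; lia.
  lia.
have := IH D.+2 isT hk; have : (0 < 'C(k, D.+1))%N by rewrite bin_gt0; lia.
lia.
Qed.

Lemma INR_expn m n : INR (expn m n) = (INR m ^ n)%R.
Proof.
elim: n => [|n IH]; first by rewrite expn0.
by rewrite expnS mult_INR IH.
Qed.

Lemma exp_pow_n (a : R) (n : nat) : (exp a ^ n = exp (INR n * a))%R.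
Proof.
elim: n => [|n IH]; first by rewrite /= Rmult_0_l exp_0.
rewrite [INR _]/INR -/(INR n.+1) S_INR /= IH -exp_plus; f_equal; ring.
Qed.

Lemma real_bound (x eps : R) (n : nat) : (1 <= x)%R -> (2 * x * ln x < INR n)%R ->
  (/ x <= eps)%R -> (x * (x - 1) ^ n <= eps * x ^ n)%R.
Proof.
move=> hx hn he.
have xp : (0 < x)%R by lra.
have h1 : (x - 1 = x * (1 - / x))%R by field; lra.
rewrite h1 Rpow_mult_distr.
have ix : (0 < / x <= 1)%R.
  split; first by apply: Rinv_0_lt_compat.
  rewrite -Rinv_1; apply: Rinv_le_contravar; lra.
have h2 : ((1 - / x) ^ n <= exp (- / x) ^ n)%R.
  apply: pow_incr; split; first lra.
  have := exp_ineq1_le (- / x); lra.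
rewrite exp_pow_n in h2.
have h3 : (exp (INR n * - / x) <= exp (-2 * ln x))%R.
  apply: Rlt_le; apply: exp_increasing.
  have : (2 * ln x < INR n * / x)%R.
    apply: (Rmult_lt_reg_r x) => //.
    have -> : (INR n * / x * x = INR n)%R by field; lra.
    have -> : (2 * ln x * x = 2 * x * ln x)%R by ring.
    lra.
  lra.
have h4 : (exp (-2 * ln x) = / x * / x)%R.
  have -> : (-2 * ln x = - (ln x + ln x))%R by ring.
  by rewrite exp_Ropp exp_plus exp_ln // Rinv_mult.
have xn : (0 < x ^ n)%R by apply: pow_lt.
have hp : (0 <= (1 - / x) ^ n)%R by apply: pow_le; lra.
have : (x * (x ^ n * (1 - / x) ^ n) <= x * (x ^ n * (/ x * / x)))%R.
  apply: Rmult_le_compat_l; first lra.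
  apply: Rmult_le_compat_l; lra.
have -> : (x * (x ^ n * (/ x * / x)) = x ^ n * / x)%R by field; lra.
move=> h5; apply: (Rle_trans _ _ _ h5).
rewrite (Rmult_comm eps); apply: Rmult_le_compat_l; lra.
Qed.

Theorem lemma1 :
  exists c : R, (0 < c)%R /\
  forall Delta : nat, (2 < Delta)%N ->
  forall eps : R, (0 < eps)%R ->
  exists K : nat, forall k n : nat,
    (K <= k)%N -> (2 * Delta - 2 <= k)%N ->
    (c * INR 'C(k, Delta) * ln (INR 'C(k, Delta)) < INR n)%R ->
    (prob_bad n k Delta <= eps)%R.
Proof.
exists 2%R; split; first lra.
move=> D hD eps heps.
have [N hN] := INR_unbounded (/ eps).
exists (2 * D + 1 + N)%N => k n hK _ hn.
have hk : (2 * D + 1 <= k)%N by lia.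
set C := 'C(k, D) in hn *.
have hC : (N + 1 <= C)%N.
  have h1 : (1 <= D)%N by lia.
  have h2 : (D <= k)%N by lia.
  have := bin_ge k D h1 h2; rewrite -/C; lia.
have hCR : (INR N + 1 <= INR C)%R.
  by rewrite -S_INR; apply: le_INR; apply/leP; rewrite -addn1.
have ie : (0 < / eps)%R by apply: Rinv_0_lt_compat.
have hinv : (/ INR C <= eps)%R.
  rewrite -[eps]Rinv_inv; apply: Rlt_le; apply: Rinv_lt_contravar; first nra.
  lra.
have hx : (1 <= INR C)%R by have := pos_INR N; lra.
have hb := card_bad n hk.
rewrite /prob_bad card_ens -/C.
have hbR : (INR #|[set A in ensemble n k D | bad D A]| <= INR C * (INR C - 1) ^ n)%R.
  have := le_INR _ _ (leP hb); rewrite mult_INR INR_expn minus_INR; last by apply/leP; lia.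
  by rewrite -/C /=.
have := real_bound (INR C) eps n hx hn hinv.
move=> hr; rewrite INR_expn.
have xn : (0 < INR C ^ n)%R by apply: pow_lt; lra.
apply: (Rmult_le_reg_r (INR C ^ n)) => //.
rewrite /Rdiv Rmult_assoc Rinv_l; lra.
Qed.
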